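(* The ideal $\underline{\mathfrak c}([E_z]_{\mathbb C},f_\rho):=\{\alpha\in\mathcal O_{f_z}:\alpha\,\Omega'(\Lambda^\vee)\subset\Omega'(\Lambda)\}$ equals $f_\rho\sqrt{D_z}\,i\,\mathcal O_{f_z}=f_\rho f_z\sqrt{D_K}\,\mathcal O_{f_z}$. Consequently the CM group $(\mathcal O_{f_z}/\underline{\mathfrak c})^\times$ is $(\mathcal O_{f_z}/f_\rho f_z\sqrt{D_K}\mathcal O_{f_z})^\times$, and it is the same for all elliptic curves with complex multiplication by $\mathcal O_{f_z}$ and the same $f_\rho$.
   Context: Let $z\in\mathcal H$ (upper half plane) with $a_zz^2+b_zz+c_z=0$ for coprime integers $a_z>0,b_z,c_z$; $D_z=4a_zc_z-b_z^2>0$; $K=\mathbb Q(z)$, discriminant $D_K<0$, embedded with $\sqrt{D_K}\in\mathcal H$; $D_z=|D_K|f_z^2$; $\mathcal O_{f_z}$ the order of conductor $f_z$, i.e. the ring of complex multiplications of $E_z=\mathbb C/(\mathbb Z+z\mathbb Z)$. Let $f_\rho\ge1$. $\Lambda$: lattice with basis $e_2,e_1$ and Gram matrix $f_\rho\begin{pmatrix}2a_z&b_z\\ b_z&2c_z\end{pmatrix}$, $\Lambda^\vee$ its dual in $\Lambda\otimes\mathbb Q$; $\Omega':\Lambda\otimes\mathbb Q\to\mathbb C$ the $\mathbb Q$-linear map with $\Omega'(e_2)=\sqrt{2a_zf_\rho}$, $\Omega'(e_1)=-\sqrt{2a_zf_\rho}\,z$. The CM group is $(\mathcal O_{f_z}/\underline{\mathfrak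 c})^\times$, acting on $\Lambda^\vee/\Lambda$ via multiplication on $\Omega'(\Lambda^\vee)/\Omega'(\Lambda)$. *)

(* Defs.v *)
(* complex numbers modelled by algC (algebraic complex numbers);
   z is quadratic, so everything lives in algC. *)
From HB Require Import structures.
From mathcomp Require Import all_boot all_order all_algebra all_field.
Set Implicit Arguments. Unset Strict Implicit. Unset Printing Implicit Defensive.
Import Order.TTheory GRing.Theory Num.Theory.
Local Open Scope ring_scope.

Definition in_lat (z w : algC) : Prop :=
  exists m n : int, w = m%:~R + n%:~R * z.

(* O_{f_z}: the ring of complex multiplications of E_z = C/(Z + zZ) *)
Definition cm_ring (z : algC) (alpha : algC) : Prop :=
  forall w, in_lat z w -> in_lat z (alpha * w).

Definition Dz (a b c : int) : int := 4 * a * c - b ^+ 2.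

(* Omega' on Lambda (x) Q, with coordinates x = u e2 + v e1 :
   Omega'(e2) = sqrt(2 a f_rho), Omega'(e1) = - sqrt(2 a f_rho) z *)
Definition Omega' (a : int) (frho : nat) (z : algC) (u v : rat) : algC :=
  sqrtC ((2 * a * frho%:Z)%:~R) * ratr u - sqrtC ((2 * a * frho%:Z)%:~R) * z * ratr v.

(* x = u e2 + v e1 lies in the dual lattice Lambda^vee for the Gram matrix
   f_rho [[2a, b],[b, 2c]] (basis e2, e1): B(x,e2), B(x,e1) are integers *)
Definition in_dual (a b c : int) (frho : nat) (u v : rat) : Prop :=
  (exists k : int, (frho%:R * (2 * a%:~R * u + b%:~R * v) : rat) = k%:~R) /\
  (exists k : int, (frho%:R * (b%:~R * u + 2 * c%:~R * v) : rat) = k%:~R).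

Definition cideal (a b c : int) (frho : nat) (z : algC) (alpha : algC) : Prop :=
  cm_ring z alpha /\
  forall u v : rat, in_dual a b c frho u v ->
    exists m n : int, alpha * Omega' a frho z u v = Omega' a frho z m%:~R n%:~R.

Definition princ (z : algC) (gamma : algC) (alpha : algC) : Prop :=
  exists beta, cm_ring z beta /\ alpha = gamma * beta.

Definition squarefreez (d : int) : Prop :=
  forall k : int, (k * k %| d)%Z -> k * k = 1.

Definition fundamental_disc (d : int) : Prop :=
  d <> 1 /\
  (((d %% 4)%Z = 1 /\ squarefreez d) \/
   (exists m : int, d = 4 * m /\ ((m %% 4)%Z = 2 \/ (m %% 4)%Z = 3) /\ squarefreez m)).

Definition good_z (z : algC) (a b c : int) : Prop :=
  0 < 'Im z /\ 0 < a /\ gcdz (gcdz a b) c = 1 /\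
  a%:~R * z ^+ 2 + b%:~R * z + c%:~R = 0 /\ 0 < Dz a b c.

(* Main.v *)
Require Import Defs.
From HB Require Import structures.
From mathcomp Require Import all_boot all_order all_algebra all_field.
From mathcomp Require Import ring zify.
Import Order.TTheory GRing.Theory Num.Theory.
Local Open Scope ring_scope.

Lemma Im_intr (k : int) : 'Im (k%:~R : algC) = 0.
Proof. by apply/Creal_ImP; exact: realz. Qed.

Lemma Im_intrM (k : int) (x : algC) : 'Im (k%:~R * x) = k%:~R * 'Im x.
Proof. by rewrite ImMl // realz. Qed.

Lemma real_coef (z : algC) (r1 r2 : int) :
  0 < 'Im z -> r1%:~R * z = r2%:~R -> r1 = 0 /\ r2 = 0.
Proof.
move=> Hz H.
have : 'Im (r1%:~R * z) = 0 by rewrite H Im_intr.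
rewrite Im_intrM => /eqP; rewrite mulf_eq0 intr_eq0 (gt_eqF Hz) orbF => /eqP r10.
split => //; move: H; rewrite r10 mul0r => /esym/eqP; by rewrite intr_eq0 => /eqP.
Qed.
Arguments real_coef {z r1 r2}.


Lemma w_eq z a b c : good_z z a b c ->
  sqrtC (Dz a b c)%:~R * 'i = 2 * a%:~R * z + b%:~R.
Proof.
case=> Hz [Ha [_ [Hq HD]]].
set s := sqrtC _; set w := 2 * _ * z + _.
have sr : s \is Num.real by apply: sqrtC_real; rewrite ler0z ltW.
have s0 : 0 <= s by rewrite sqrtC_ge0 ler0z ltW.
have Hw2 : w ^+ 2 = (s * 'i) ^+ 2.
  rewrite exprMn sqrCi sqrtCK /w /Dz.
  have -> : (2 * a%:~R * z + b%:~R) ^+ 2 = 4 * a%:~R * (a%:~R * z ^+ 2 + b%:~R * z + c%:~R) - (4 * a * c - b ^+ 2)%:~R by ring.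
  by rewrite Hq mulr0 sub0r mulrN1.
have : (w - s * 'i) * (w + s * 'i) = 0 by rewrite -subr_sqr Hw2 subrr.
move/eqP; rewrite mulf_eq0 => /orP [|]; first by rewrite subr_eq0 => /eqP.
rewrite addr_eq0 => /eqP Hw; exfalso.
have Imw : 'Im w = (2 * a)%:~R * 'Im z.
  rewrite /w raddfD /= Im_intr addr0 -Im_intrM; f_equal; ring.
have : 0 < 'Im w by rewrite Imw mulr_gt0 // ltr0z mulr_gt0.
have /Creal_ReP Rs := sr.
by rewrite Hw raddfN /= ImMir Rs oppr_gt0 sqrtC_lt0.
Qed.
Arguments w_eq {z a b c}.


Lemma key z a b c (f : nat) (u v : rat) :
  a%:~R * z ^+ 2 + b%:~R * z + c%:~R = 0 ->
  f%:R * (2 * a%:~R * z + b%:~R) * (ratr u - z * ratr v) =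
  ratr (f%:R * (2 * a%:~R * u + b%:~R * v)) * z +
  ratr (f%:R * (b%:~R * u + 2 * c%:~R * v)) :> algC.
Proof.
move=> H; apply/eqP; rewrite -subr_eq0; apply/eqP.
transitivity (-(2 * f%:R * ratr v) * (a%:~R * z ^+ 2 + b%:~R * z + c%:~R) : algC).
  ring.
by rewrite H mulr0.
Qed.
Arguments key {z a b c}.


Lemma cm_mul z x y : cm_ring z x -> cm_ring z y -> cm_ring z (x * y).
Proof. by move=> Hx Hy w Hw; rewrite -mulrA; apply: Hx; apply: Hy. Qed.

Lemma cm_gamma z a b c (f : nat) :
  a%:~R * z ^+ 2 + b%:~R * z + c%:~R = 0 ->
  cm_ring z (f%:R * (2 * a%:~R * z + b%:~R)).
Proof.
move=> H w [m [n ->]].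
exists (f%:Z * (b * m - 2 * c * n)), (f%:Z * (2 * a * m - b * n)).
apply/eqP; rewrite -subr_eq0; apply/eqP.
transitivity ((2 * f%:R * n%:~R) * (a%:~R * z ^+ 2 + b%:~R * z + c%:~R) : algC).
  ring.
by rewrite H mulr0.
Qed.

Lemma Om_eq a (f : nat) z u v :
  Omega' a f z u v = sqrtC ((2 * a * f%:Z)%:~R) * (ratr u - z * ratr v).
Proof. rewrite /Omega'; ring. Qed.

Lemma part1 z a b c (f : nat) : good_z z a b c -> (1 <= f)%N ->
  forall alpha, cideal a b c f z alpha <->
     princ z (f%:R * sqrtC (Dz a b c)%:~R * 'i) alpha.
Proof.
move=> Hg Hf alpha.
have Hg' := Hg; case: Hg' => Hz [Ha [_ [Hq HD]]].
rewrite -mulrA (w_eq Hg).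
pose s := sqrtC ((2 * a * f%:Z)%:~R : algC).
have s0 : s != 0.
  rewrite /s sqrtC_eq0 intr_eq0 mulf_neq0 ?mulf_neq0 // ?gt_eqF //.
have f0 : (f%:R : algC) != 0 by rewrite pnatr_eq0 -lt0n.
have w0 : 2 * a%:~R * z + b%:~R != 0.
  rewrite -(w_eq Hg) mulf_neq0 ?neq0Ci // sqrtC_eq0 intr_eq0 gt_eqF //.
have g0 : f%:R * (2 * a%:~R * z + b%:~R) != 0 by rewrite mulf_neq0.
set g := f%:R * _.
split.
- case=> Hcm Hdual.
  exists (alpha / g); split; last by rewrite mulrC divfK.
  move=> w [m [n ->]].
  pose Dq : rat := (Dz a b c)%:~R.
  have Dq0 : Dq != 0 by rewrite /Dq intr_eq0 gt_eqF.
  have fq0 : (f%:R : rat) != 0 by rewrite pnatr_eq0 -lt0n.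
  have Dq' : (4 * a%:~R * c%:~R - b%:~R ^+ 2 : rat) = Dq by rewrite /Dq /Dz; ring.
  pose u : rat := (2 * c%:~R * n%:~R - b%:~R * m%:~R) / (f%:R * Dq).
  pose v : rat := (2 * a%:~R * m%:~R - b%:~R * n%:~R) / (f%:R * Dq).
  have e1 : f%:R * (2 * a%:~R * u + b%:~R * v) = n%:~R :> rat.
    rewrite /u /v /Dq /Dz; field.
    by rewrite Dq'; apply/andP; split.
  have e2 : f%:R * (b%:~R * u + 2 * c%:~R * v) = m%:~R :> rat.
    rewrite /u /v /Dq /Dz; field.
    by rewrite Dq'; apply/andP; split.
  have [p [q Hpq]] := Hdual u v (conj (ex_intro _ n e1) (ex_intro _ m e2)).
  move: Hpq; rewrite !Om_eq !ratr_int -/s mulrCA => /(mulfI s0) Hpq.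
  have Hk := key f u v Hq; rewrite e1 e2 !ratr_int -/g in Hk.
  exists p, (-q).
  rewrite (_ : m%:~R + n%:~R * z = n%:~R * z + m%:~R); last by rewrite addrC.
  rewrite -Hk mulrA divfK // Hpq; ring.
- case=> beta [Hb ->]; split.
    exact: (cm_mul _ _ _ (cm_gamma _ _ _ _ f Hq) Hb).
  move=> u v [[k1 e1] [k2 e2]].
  have [p [q Hpq]] := Hb (k2%:~R + k1%:~R * z) (ex_intro _ k2 (ex_intro _ k1 erefl)).
  exists p, (-q).
  rewrite !Om_eq !ratr_int -/s.
  have Hk := key f u v Hq; rewrite e1 e2 !ratr_int -/g in Hk.
  transitivity (s * (beta * (g * (ratr u - z * ratr v)))); first ring.
  rewrite Hk addrC Hpq; ring.
Qed.

Lemma cm_form z a b c alpha : good_z z a b c -> cm_ring z alpha ->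
  exists m k : int, alpha = m%:~R + k%:~R * (a%:~R * z).
Proof.
case=> Hz [Ha [Hgcd [Hq HD]]] H.
have [m [n Hal]] : in_lat z (alpha * 1) by apply: H; exists 1, 0; rewrite mul0r addr0.
rewrite mulr1 in Hal.
have [p [q Hzq]] : in_lat z (alpha * z) by apply: H; exists 0, 1; rewrite mul1r add0r.
have E : (a * q - a * m + n * b)%:~R * z = (- (n * c) - a * p)%:~R :> algC.
  apply/eqP; rewrite -subr_eq0; apply/eqP.
  transitivity (a%:~R * (p%:~R + q%:~R * z - alpha * z)
                + n%:~R * (a%:~R * z ^+ 2 + b%:~R * z + c%:~R) : algC).
    rewrite Hal; ring.
  by rewrite Hzq subrr Hq !mulr0 addr0.
have [E1 E2] := real_coef Hz E.
have Hnb : n * b = (m - q) * a.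
  have -> : n * b = (m - q) * a + (a * q - a * m + n * b) by ring.
  by rewrite E1 addr0.
have Hnc : n * c = (- p) * a.
  have -> : n * c = (- p) * a - (- (n * c) - a * p) by ring.
  by rewrite E2 subr0.
have [u1 [v1 H1]] := Bezoutz a b.
have [u2 [v2 H2]] := Bezoutz (gcdz a b) c.
rewrite Hgcd in H2.
have Hn1 : n = n * (u2 * (u1 * a + v1 * b) + v2 * c) by rewrite H1 H2 mulr1.
have Hn : n = (u2 * u1 * n + u2 * v1 * (m - q) + v2 * (- p)) * a.
  transitivity (u2 * u1 * n * a + u2 * v1 * (n * b) + v2 * (n * c)).
    rewrite {1}Hn1; ring.
  rewrite Hnb Hnc; ring.
exists m, (u2 * u1 * n + u2 * v1 * (m - q) + v2 * (- p)).
rewrite Hal {1}Hn rmorphM /=; ring.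
Qed.
Arguments cm_form {z a b c alpha}.


Lemma cm_az z a b c : good_z z a b c -> cm_ring z (a%:~R * z).
Proof.
case=> Hz [Ha [_ [Hq HD]]] w [m [n ->]].
exists (- (n * c)), (a * m - n * b).
apply/eqP; rewrite -subr_eq0; apply/eqP.
transitivity (n%:~R * (a%:~R * z ^+ 2 + b%:~R * z + c%:~R) : algC); first ring.
by rewrite Hq mulr0.
Qed.
Arguments cm_az {z a b c}.


Lemma sqrt_same z a b c z' a' b' c' : good_z z a b c -> good_z z' a' b' c' ->
  (forall alpha, cm_ring z' alpha <-> cm_ring z alpha) ->
  sqrtC ((Dz a' b' c')%:~R : algC) = sqrtC (Dz a b c)%:~R.
Proof.
move=> Hg Hg' Heq.
have Hg0 := Hg; have Hg0' := Hg'.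
case: Hg0 => Hz [Ha _]; case: Hg0' => Hz' [Ha' _].
have [m [k Hk]] := cm_form Hg ((Heq _).1 (cm_az Hg')).
have [m' [k' Hk']] := cm_form Hg' ((Heq _).2 (cm_az Hg)).
have E : ((1 - k' * k) * a)%:~R * z = (m' + k' * m)%:~R :> algC.
  apply/eqP; rewrite -subr_eq0; apply/eqP.
  transitivity (a%:~R * z - (m'%:~R + k'%:~R * (a'%:~R * z')) : algC).
    rewrite Hk; ring.
  by rewrite -Hk' subrr.
have [E1 _] := real_coef Hz E.
have kk : k' * k = 1.
  move/eqP: E1; rewrite mulf_eq0 (gt_eqF Ha) orbF subr_eq0 => /eqP.
  by move=> <-.
have Imk : 'Im (a'%:~R * z') = k%:~R * 'Im (a%:~R * z).
  by rewrite Hk raddfD /= Im_intr add0r Im_intrM.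
have k0 : 0 < k.
  move: Imk; rewrite !Im_intrM => Imk.
  have : 0 < k%:~R * (a%:~R * 'Im z) :> algC.
    by rewrite -Imk mulr_gt0 // ltr0z.
  by rewrite pmulr_lgt0 ?ltr0z // mulr_gt0 // ltr0z.
have k1 : k = 1.
  have H3 : 0 < k' by rewrite -(pmulr_lgt0 _ k0) kk.
  nia.
rewrite k1 mul1r in Hk.
have E' : (sqrtC (Dz a' b' c')%:~R - sqrtC (Dz a b c)%:~R) * 'i
          = (2 * m + b' - b)%:~R :> algC.
  rewrite mulrBl (w_eq Hg) (w_eq Hg').
  transitivity (2 * (a'%:~R * z') + b'%:~R - (2 * a%:~R * z + b%:~R)); first ring.
  rewrite Hk; ring.
have : 'Im ((sqrtC (Dz a' b' c')%:~R - sqrtC (Dz a b c)%:~R) * 'i) = 0 :> algC.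
  by rewrite E' Im_intr.
case: Hg => _ [_ [_ [_ HD]]]; case: Hg' => _ [_ [_ [_ HD']]].
have sr : sqrtC ((Dz a b c)%:~R : algC) \is Num.real by apply: sqrtC_real; rewrite ler0z ltW.
have sr' : sqrtC ((Dz a' b' c')%:~R : algC) \is Num.real by apply: sqrtC_real; rewrite ler0z ltW.
have /Creal_ReP Rs : sqrtC ((Dz a' b' c')%:~R : algC) - sqrtC (Dz a b c)%:~R \is Num.real.
  by rewrite rpredB.
by rewrite ImMir Rs => /eqP; rewrite subr_eq0 => /eqP.
Qed.
Arguments sqrt_same {z a b c z' a' b' c'}.


Theorem proposition3p1p2 (z : algC) (a b c : int) (frho : nat) (DK : int) (fz : nat) :
  good_z z a b c -> (1 <= frho)%N ->
  fundamental_disc DK -> Dz a b c = - DK * (fz%:Z) ^+ 2 ->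
  (* c = f_rho sqrt(D_z) i O_{f_z} *)
  (forall alpha, cideal a b c frho z alpha <->
     princ z (frho%:R * sqrtC (Dz a b c)%:~R * 'i) alpha) /\
  (* c = f_rho f_z sqrt(D_K) O_{f_z}, with sqrt(D_K) = i sqrt|D_K| in H *)
  (forall alpha, cideal a b c frho z alpha <->
     princ z (frho%:R * fz%:R * ('i * sqrtC (- DK)%:~R)) alpha) /\
  (* the ideal (hence the CM group (O_{f_z}/c)^x) is the same for every
     elliptic curve E_{z'} with CM ring O_{f_z} and the same f_rho *)
  (forall (z' : algC) (a' b' c' : int), good_z z' a' b' c' ->
     (forall alpha, cm_ring z' alpha <-> cm_ring z alpha) ->
     forall alpha, cideal a' b' c' frho z' alpha <-> cideal a b c frho z alpha).
Proof.
move=> Hg Hf _ HDK.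
split; first exact: part1.
split.
  move=> alpha; rewrite part1 //.
  have HD : 0 < Dz a b c by case: Hg => _ [_ [_ [_ ->]]].
  have DK0 : 0 <= - DK by move: HD; rewrite HDK => ?; nia.
  have -> : sqrtC ((Dz a b c)%:~R : algC) = fz%:R * sqrtC (- DK)%:~R.
    rewrite HDK.
    have -> : ((- DK * fz%:Z ^+ 2)%:~R : algC) = (- DK)%:~R * (fz%:R) ^+ 2 by ring.
    rewrite sqrtCM.
    - by rewrite sqrCK ?ler0n // mulrC.
    - by rewrite nnegrE ler0z.
    - by rewrite nnegrE exprn_ge0 ?ler0n.
  by rewrite (mulrC 'i) !mulrA.
move=> z' a' b' c' Hg' Heq alpha.
rewrite part1 // part1 // (sqrt_same Hg Hg' Heq).
split; case=> beta [Hb ->]; exists beta; split => //; exact/Heq.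
Qed.
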